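(* Let $\widetilde D,\widetilde C\in\mathbb{R}^{d\times d}$ satisfy Condition $\widetilde A$, let $K$ be the unique symmetric positive definite solution of $2\widetilde D=\widetilde CK+K\widetilde C^T$, and set $C:=K^{-1/2}\widetilde CK^{1/2}$, $C_S:=\frac12(C+C^T)$, $C_{AS}:=\frac12(C-C^T)$. For $m\in\mathbb N_0$ define $$T_m:=\sum_{j=0}^m C_{AS}^j C_S (C_{AS}^T)^j,\qquad \widetilde T_m:=\sum_{j=0}^m \widetilde C^j\widetilde D(\widetilde C^T)^j.$$ Then for every $m\in\mathbb N_0$: $T_m$ is positive definite if and only if $\widetilde T_m$ is positive definite. In particular the minimal $m$ with $T_m>0$ equals the minimal $m$ with $\widetilde T_m>0$.
   Context: Condition $\widetilde A$: (1) $\widetilde D$ is symmetric positive semi-definite; (2) there is no non-trivial $\widetilde C^T$-invariant subspace of $\ker\widetilde D$; (3) $\widetilde C$ is positive stable, i.e. all its eigenvalues have positive real part. Under this condition the symmetric positive definite solution $K$ of the Lyapunov equation exists and is unique, and $K^{-1/2}\widetilde DK^{-1/2}=C_S$. The minimal $m$ with $T_m>0$ (resp. $\widetilde T_m>0$) is called the hypocoercivity index. *)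

(* Defs.v *)
From HB Require Import structures.
From mathcomp Require Import all_boot all_order all_algebra.
From mathcomp Require Import complex.
From mathcomp Require Import reals.
Set Implicit Arguments. Unset Strict Implicit. Unset Printing Implicit Defensive.
Import Order.TTheory GRing.Theory Num.Theory.
Local Open Scope ring_scope.
Local Open Scope complex_scope.

Section Defs.
Variable R : realType.
Variable d : nat.

Definition posdef (A : 'M[R]_d) : Prop :=
  A^T = A /\ forall x : 'cV[R]_d, x != 0 -> 0 < (x^T *m A *m x) 0 0.

Definition possemidef (A : 'M[R]_d) : Prop :=
  A^T = A /\ forall x : 'cV[R]_d, 0 <= (x^T *m A *m x) 0 0.

Definition positive_stable (A : 'M[R]_d) : Prop :=
  forall lam : R[i],
    eigenvalue (map_mx (fun x : R => x%:C) A) lam -> 0 < Re lam.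

(* A subspace of R^d is encoded as the row space of V, each row being v^T;
   C^T-invariance of {v} reads (V *m C <= V) in row form, and v in ker D
   (D v = 0) reads v^T D^T = 0, i.e. V <= kermx D^T. *)
Definition no_inv_subspace_ker (Ct Dt : 'M[R]_d) : Prop :=
  forall V : 'M[R]_d,
    (V *m Ct <= V)%MS -> (V <= kermx Dt^T)%MS -> V = 0.

Definition condition_A (Dt Ct : 'M[R]_d) : Prop :=
  [/\ possemidef Dt, no_inv_subspace_ker Ct Dt & positive_stable Ct].

Definition Tm (C : 'M[R]_d) (m : nat) : 'M[R]_d :=
  let CS := 2%:R^-1 *: (C + C^T) in
  let CAS := 2%:R^-1 *: (C - C^T) in
  \sum_(j < m.+1) (CAS ^+ j *m CS *m (CAS^T) ^+ j).

Definition Ttm (Ct Dt : 'M[R]_d) (m : nat) : 'M[R]_d :=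
  \sum_(j < m.+1) (Ct ^+ j *m Dt *m (Ct^T) ^+ j).

End Defs.

(* Main.v *)
Require Import Defs.
From HB Require Import structures.
From mathcomp Require Import all_boot all_order all_algebra.
From mathcomp Require Import complex.
From mathcomp Require Import reals.
From mathcomp Require Import ring lra.
Import Order.TTheory GRing.Theory Num.Theory.
Local Open Scope ring_scope.

Set Implicit Arguments. Unset Strict Implicit.
Section H.
Variable R : realType.
Variable d : nat.
Implicit Types (P U V A S N : 'M[R]_d) (x y : 'cV[R]_d).

Definition q P x := (x^T *m P *m x) 0 0.

Lemma trX V j : (V ^+ j)^T = (V^T) ^+ j.
Proof.
elim: j => [|j IH]; first by rewrite !expr0 trmx1.
by rewrite exprS exprSr -!mulmxE trmx_mul IH.
Qed.

Lemma bil_sym P x y : P^T = P -> (x^T *m P *m y) 0 0 = (y^T *m P *m x) 0 0.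
Proof.
move=> sP; have -> : (x^T *m P *m y) 0 0 = ((x^T *m P *m y)^T) 0 0 by rewrite [RHS]mxE.
by rewrite !trmx_mul trmxK sP mulmxA.
Qed.

Lemma psd_ker P x : possemidef P -> q P x = 0 -> P *m x = 0.
Proof.
move=> [sP pP] qx.
have key : forall y, (y^T *m P *m x) 0 0 = 0.
  move=> y; set a := (y^T *m P *m x) 0 0.
  set b := (y^T *m P *m y) 0 0.
  have b0 : 0 <= b by apply: pP.
  have E : forall t : R, q P (x + t *: y) = 2 * t * a + t ^+ 2 * b.
    move=> t; rewrite /q.
    rewrite [(_ + _)^T]linearD /= [(_ *: y)^T]linearZ /= !mulmxDl !mulmxDr.
    rewrite -!scalemxAl -!scalemxAr.
    have := bil_sym x y sP; rewrite -/a /q in qx *.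
    move: qx; rewrite /a /b.
    move: (x^T *m P *m x) (x^T *m P *m y) (y^T *m P *m x) (y^T *m P *m y) => M1 M2 M3 M4 e1 e2.
    rewrite !mxE e1 e2.
    ring.
  apply/eqP; apply/negPn/negP => an0.
  have h := pP (x + (- a / (b + 1)) *: y); rewrite -/(q _ _) E in h.
  have b1 : 0 < b + 1 by rewrite ltr_wpDl.
  set t := - a / (b + 1) in h.
  have ht : t * (b + 1) = - a by rewrite /t mulfVK // gt_eqF.
  have tn0 : t != 0 by apply: contraNneq an0 => t0; move: ht; rewrite t0 mul0r => /eqP; rewrite eq_sym oppr_eq0.
  have e2 : 2 * t * a + t ^+ 2 * b = - (t ^+ 2 * (b + 2)).
    have -> : a = - (t * (b + 1)) by rewrite ht opprK.
    ring.
  have : 0 < t ^+ 2 * (b + 2) by rewrite mulr_gt0 // ?exprn_even_gt0 // ?ltr_wpDl.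
  by move: h; rewrite e2 oppr_ge0 => /le_lt_trans h /h; rewrite ltxx.
apply/matrixP => i j; rewrite (ord1 j) [RHS]mxE.
have := key (delta_mx i 0).
by rewrite trmx_delta -mulmxA -rowE => <-; rewrite [RHS]mxE.
Qed.

Lemma quad_sum P V m x :
  (x^T *m (\sum_(j < m.+1) (V ^+ j *m P *m (V^T) ^+ j)) *m x) 0 0
  = \sum_(j < m.+1) q P ((V^T)^+j *m x).
Proof.
rewrite mulmx_sumr mulmx_suml summxE; apply: eq_bigr => j _.
by rewrite /q (trmx_mul ((V^T)^+j) x) -trX trmxK !mulmxA.
Qed.

Lemma sym_sum P V m : P^T = P ->
  (\sum_(j < m.+1) (V ^+ j *m P *m (V^T) ^+ j))^T = \sum_(j < m.+1) (V ^+ j *m P *m (V^T) ^+ j).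
Proof.
move=> sP; rewrite linear_sum; apply: eq_bigr => j _ /=.
by rewrite !trmx_mul sP -trX trmxK !mulmxA.
Qed.

Lemma posdef_sum P V m : possemidef P ->
  posdef (\sum_(j < m.+1) (V ^+ j *m P *m (V^T) ^+ j)) <->
  (forall x, x != 0 -> ~ (forall j : 'I_m.+1, P *m ((V^T)^+j *m x) = 0)).
Proof.
move=> [sP pP]; split.
  move=> [_ H] x xn0 allj; have := H x xn0; rewrite quad_sum big1 ?ltxx //.
  by move=> j _; rewrite /q -mulmxA allj mulmx0 mxE.
move=> H; split; first exact: sym_sum.
move=> x xn0; rewrite quad_sum lt0r sumr_ge0 ?andbT; last by move=> j _; apply: pP.
apply/eqP => s0; apply: (H x xn0) => j; apply: psd_ker; first by split.
by apply: (psumr_eq0P _ s0) => // i _; apply: pP.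
Qed.


Lemma pow_eq P N x k : (forall j, (j < k)%N -> P *m ((P+N)^+j *m x) = 0) ->
  (P+N)^+k *m x = N^+k *m x.
Proof.
elim: k => [|k IH] H; first by rewrite !expr0.
rewrite !exprS -!mulmxE -!mulmxA IH; last by move=> j jk; apply: H; apply: ltnW.
rewrite mulmxDl -IH ?H //; first by rewrite add0r.
by move=> j jk; apply: H; apply: ltnW.
Qed.

Lemma pow_eq' P N x k : (forall j, (j < k)%N -> P *m (N^+j *m x) = 0) ->
  (P+N)^+k *m x = N^+k *m x.
Proof.
elim: k => [|k IH] H; first by rewrite !expr0.
rewrite !exprS -!mulmxE -!mulmxA IH; last by move=> j jk; apply: H; apply: ltnW.
by rewrite mulmxDl H // add0r.
Qed.

Lemma kern_equiv P N x m :
  (forall j : 'I_m.+1, P *m (N^+j *m x) = 0) <->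
  (forall j : 'I_m.+1, P *m ((P+N)^+j *m x) = 0).
Proof.
split => H j.
  rewrite pow_eq' //; move=> i ij.
  exact: (H (Ordinal (ltn_trans ij (ltn_ord j)))).
rewrite -(@pow_eq P N x j) //; move=> i ij.
exact: (H (Ordinal (ltn_trans ij (ltn_ord j)))).
Qed.

Lemma posdef_unit S : posdef S -> S \in unitmx.
Proof.
move=> [sS pS]; rewrite unitmxE unitfE; apply/negP => /det0P [v vn0 vS].
have xn0 : v^T != 0 by rewrite trmx_eq0.
have := pS _ xn0; rewrite -mulmxA -{1}sS -trmx_mul vS trmx0 mulmx0 mxE ltxx.
done.
Qed.

Lemma conj_pow S A j : S \in unitmx ->
  (S *m A *m invmx S) ^+ j = S *m A ^+ j *m invmx S.
Proof.
move=> uS; elim: j => [|j IH].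
  by rewrite !expr0 mulmx1 mulmxV.
rewrite !exprS -!mulmxE IH !mulmxA mulmxKV //.
Qed.

End H.

Unset Implicit Arguments.
Theorem proposition3p11 (R : realType) (d : nat) (Dt Ct K S : 'M[R]_d) :
  condition_A Dt Ct ->
  posdef K ->
  2%:R *: Dt = Ct *m K + K *m Ct^T ->
  posdef S -> S *m S = K ->
  forall m : nat,
    posdef (Tm (invmx S *m Ct *m S) m) <-> posdef (Ttm Ct Dt m).
Proof.
move=> [psdD _ _] _ eK pS eS m.
have uS := posdef_unit pS.
have sS : S^T = S by case: pS.
have sD : Dt^T = Dt by case: psdD.
set iS := invmx S.
have siS : iS^T = iS by rewrite /iS trmx_inv sS.
set C := iS *m Ct *m S.
set CS := 2%:R^-1 *: (C + C^T).
set V := 2%:R^-1 *: (C - C^T).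
set N := V^T.
have CT : C^T = S *m Ct^T *m iS by rewrite /C !trmx_mul siS sS mulmxA.
have eCS : CS = iS *m Dt *m iS.
  have -> : Dt = 2%:R^-1 *: (2%:R *: Dt) by rewrite scalerA mulVf ?scale1r ?pnatr_eq0.
  rewrite eK -eS /CS CT -scalemxAr -scalemxAl; congr (_ *: _).
  rewrite mulmxDr mulmxDl /C /iS !mulmxA mulmxK // mulVmx // mul1mx.
  done.
have CTsum : C^T = CS + N.
  apply/matrixP => i j; rewrite /CS /N !mxE.
  have h2 : (2%:R : R) != 0 by rewrite pnatr_eq0.
  by field.
have psdCS : possemidef CS.
  rewrite eCS; split; first by rewrite !trmx_mul siS sD mulmxA.
  move=> y; have := psdD.2 (iS *m y).
  by rewrite trmx_mul siS !mulmxA.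
have -> : Tm C m = \sum_(j < m.+1) (V ^+ j *m CS *m (V^T) ^+ j) by [].
rewrite posdef_sum // /Ttm posdef_sum //.
split => H y yn0 allj.
  apply: (H (S *m y)).
    apply: contra yn0 => /eqP e; apply/eqP.
    by rewrite -(mulKmx uS y) e mulmx0.
  apply/kern_equiv; rewrite -CTsum => j.
  rewrite CT conj_pow // eCS /iS !mulmxA mulmxKV // mulmxKV //.
  by rewrite -!mulmxA allj mulmx0.
apply: (H (iS *m y)).
  apply: contra yn0 => /eqP e; apply/eqP.
  by rewrite -(mulKVmx uS y) e mulmx0.
move=> j; have := (proj1 (kern_equiv _ _ _ _) allj) j.
rewrite -CTsum CT conj_pow // eCS /iS !mulmxA mulmxKV // -!mulmxA => e.
by rewrite -(mulKVmx uS (Dt *m _)) e mulmx0.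
Qed.
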